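(* Consider any economy $\mathcal{E}$ (as in the context). If firm $f$ and worker $w$ form a top-top match in state $\theta$ (i.e. in market $\mathcal{M}(\theta)$, $w$ is $f$'s favorite worker among all workers and $f$ is $w$'s favorite firm among all firms), then $f$ and $w$ are matched to each other in state $\theta$ under every BNE (with truthfully reporting firms).
   Context: Matching market: $(F,W,U)$ with finite firms, finite workers, utilities of each firm from each worker and each worker from each firm; unmatched utility $0$; all preferences strict; all pairs mutually acceptable. An economy is $\mathcal{E}=(F,W,\{U(\theta)\}_{\theta\in\Theta},\Theta,\Psi)$ with finite state set $\Theta$, full-support prior $\Psi$, market $\mathcal{M}(\theta)=(F,W,U(\theta))$ in state $\theta$; workers' utilities are state-independent, firms' may depend on $\theta$; each $\mathcal{M}(\theta)$ has a unique stable matching. Game: state drawn by $\Psi$; firms observe it; each worker knows only his own preferences; all simultaneously submit rank-ordered lists of acceptable partners; firm-proposing Deferred Acceptance is run on the reports. Firms report truthfully; a worker's strategy is one list; a BNE is a profile in which each worker's list maximizes his expected utility under $\Psi$ given the others' strategies. *)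

(* Defs.v *)
From mathcomp Require Import all_boot all_order all_algebra.
Set Implicit Arguments. Unset Strict Implicit. Unset Printing Implicit Defensive.
Import Order.TTheory GRing.Theory Num.Theory.
Local Open Scope ring_scope.

Section Matching.
Variables (R : realFieldType) (F W : finType).

(* Truthful firm report: all workers (all acceptable), ranked by decreasing utility. *)
Definition firm_list (uf : F -> W -> R) (f : F) : seq W :=
  sort (fun a b => uf f b <= uf f a) (enum W).

(* PF f : firm f's rank-ordered list of acceptable workers;
   PW w : worker w's rank-ordered list of acceptable firms.
   State k f = number of workers on f's list to whom f has proposed so far. *)
Section DA.
Variables (PF : F -> seq W) (PW : W -> seq F).

Definition proposed (k : {ffun F -> nat}) (f : F) (w : W) : bool :=
  w \in take (k f) (PF f).

Definition cands (k : {ffun F -> nat}) (w : W) (f : F) : bool :=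
  proposed k f w && (f \in PW w).

Definition held (k : {ffun F -> nat}) (w : W) : option F :=
  [pick f | cands k w f &&
     [forall g, cands k w g ==> (index f (PW w) <= index g (PW w))%N]].

Definition is_held (k : {ffun F -> nat}) (f : F) : bool :=
  [exists w, held k w == Some f].

Definition da_step (k : {ffun F -> nat}) : {ffun F -> nat} :=
  [ffun f => if ~~ is_held k f && (k f < size (PF f))%N then (k f).+1 else k f].

(* enough rounds to reach the fixpoint (total proposals <= sum of list sizes) *)
Definition da_final : {ffun F -> nat} :=
  iter (\sum_(f : F) size (PF f)).+1 da_step [ffun => 0%N].

Definition da_outcome (w : W) : option F := held da_final w.
End DA.

Definition wutil (uW : W -> F -> R) (w : W) (o : option F) : R :=
  if o is Some f then uW w f else 0.

Definition deviate (sigma : {ffun W -> seq F}) (w : W) (s : seq F) :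
  {ffun W -> seq F} := [ffun w' => if w' == w then s else sigma w'].

Definition exp_util (Th : finType) (uF : Th -> F -> W -> R) (uW : W -> F -> R)
    (Psi : Th -> R) (sigma : {ffun W -> seq F}) (w : W) : R :=
  \sum_(th : Th) Psi th * wutil uW w (da_outcome (firm_list (uF th)) sigma w).

(* Bayes-Nash equilibrium among workers (firms report truthfully). *)
Definition is_BNE (Th : finType) (uF : Th -> F -> W -> R) (uW : W -> F -> R)
    (Psi : Th -> R) (sigma : {ffun W -> seq F}) : Prop :=
  (forall w, uniq (sigma w)) /\
  forall (w : W) (s : seq F), uniq s ->
    exp_util uF uW Psi (deviate sigma w s) w <= exp_util uF uW Psi sigma w.

Definition is_matching (mu : {ffun W -> option F}) : Prop :=
  forall w1 w2 f, mu w1 = Some f -> mu w2 = Some f -> w1 = w2.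

Definition futil (uf : F -> W -> R) (mu : {ffun W -> option F}) (f : F) : R :=
  if [pick w | mu w == Some f] is Some w then uf f w else 0.

Definition individually_rational (uf : F -> W -> R) (uW : W -> F -> R)
    (mu : {ffun W -> option F}) : Prop :=
  forall w f, mu w = Some f -> 0 <= uW w f /\ 0 <= uf f w.

Definition blocking (uf : F -> W -> R) (uW : W -> F -> R)
    (mu : {ffun W -> option F}) (f : F) (w : W) : Prop :=
  wutil uW w (mu w) < uW w f /\ futil uf mu f < uf f w.

Definition stable (uf : F -> W -> R) (uW : W -> F -> R)
    (mu : {ffun W -> option F}) : Prop :=
  [/\ is_matching mu, individually_rational uf uW mu &
      forall f w, ~ blocking uf uW mu f w].

Definition unique_stable (uf : F -> W -> R) (uW : W -> F -> R) : Prop :=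
  (exists mu, stable uf uW mu) /\
  forall mu1 mu2, stable uf uW mu1 -> stable uf uW mu2 -> mu1 = mu2.

End Matching.

(* Main.v *)
Require Import Defs.
From mathcomp Require Import all_boot all_order all_algebra.
Import Order.TTheory GRing.Theory Num.Theory.

Lemma idx_filter (T : eqType) (p : pred T) (s : seq T) g h :
  p g -> p h -> g \in s -> h \in s ->
  (index g (filter p s) <= index h (filter p s))%N = (index g s <= index h s)%N.
Proof.
move=> pg ph; elim: s => //= x s IH; rewrite !inE.
case: (eqVneq x g) => [exg|nxg] /=.
  by subst x; rewrite pg /= eqxx.
case: (eqVneq x h) => [exh|nxh] /=.
  by subst x; rewrite ph /= eqxx (negbTE nxg).
move=> gs hs; case: (p x) => /=.
  by rewrite (negbTE nxg) (negbTE nxh) ltnS IH.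
by rewrite IH.
Qed.

Lemma proposed_mono (F W : finType) (PF : F -> seq W) (k k' : {ffun F -> nat}) g v :
  (k g <= k' g)%N -> proposed PF k g v -> proposed PF k' g v.
Proof.
rewrite /proposed => le H; have Hs := mem_take H.
rewrite (in_take _ Hs) in H; rewrite (in_take _ Hs); exact: leq_trans H le.
Qed.

Lemma step_mono (F W : finType) (PF : F -> seq W) PW (k : {ffun F -> nat}) g :
  (k g <= da_step PF PW k g)%N.
Proof. by rewrite /da_step ffunE; case: ifP. Qed.

Lemma iter_mono (F W : finType) (PF : F -> seq W) PW n (k : {ffun F -> nat}) g :
  (k g <= iter n (da_step PF PW) k g)%N.
Proof.
elim: n => //= n IH; apply: leq_trans IH _; apply: step_mono.
Qed.

Section Dev.
Variables (F W : finType) (PF : F -> seq W) (PW PW' : W -> seq F) (f : F) (w : W).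
Hypothesis HPw : PW' w = f :: filter (predC1 f) (PW w).
Hypothesis HPo : forall v, v != w -> PW' v = PW v.

Lemma held_f k : proposed PF k f w -> held PF PW' k w = Some f.
Proof.
move=> Hp; rewrite /held.
have Pf : (cands PF PW' k w f && [forall g, cands PF PW' k w g ==>
     (index f (PW' w) <= index g (PW' w))%N]).
  rewrite /cands Hp HPw inE eqxx /= eqxx.
  by apply/forallP => g; apply/implyP => _; apply: leq0n.
case: pickP => [g /andP [Cg /forallP /(_ f) /implyP Hg]|/(_ f)]; last by rewrite Pf.
have := Hg (proj1 (andP Pf)).
move: Cg => /andP [_]; rewrite HPw inE => /orP [/eqP -> //|_] /=.
by rewrite eqxx; case: eqP => [->|].
Qed.

Lemma held_same k : ~~ proposed PF k f w -> forall v, held PF PW' k v = held PF PW k v.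
Proof.
move=> Hn v; case: (eqVneq v w) => [->|nvw]; last first.
  by rewrite /held /cands HPo.
rewrite /held; apply: eq_pick => g /=.
have Ce : forall h, cands PF PW' k w h = cands PF PW k w h.
  move=> h; rewrite /cands HPw inE mem_filter /=.
  case: (eqVneq h f) => [->|nhf] /=; first by rewrite (negbTE Hn).
  by [].
rewrite Ce; case Cg: (cands PF PW k w g) => //=.
apply: eq_forallb => h; rewrite Ce; case Ch: (cands PF PW k w h) => //=.
move: Cg Ch => /andP [Pg Mg] /andP [Ph Mh].
have gf : g != f by apply: contraNneq Hn => <-.
have hf : h != f by apply: contraNneq Hn => <-.
rewrite HPw /= eq_sym (negbTE gf) eq_sym (negbTE hf) ltnS.
by apply: idx_filter => //=.
Qed.

Lemma step_same k : ~~ proposed PF k f w -> da_step PF PW' k = da_step PF PW k.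
Proof.
move=> Hn; apply/ffunP => g; rewrite !ffunE /is_held.
have -> : [exists v, held PF PW' k v == Some g] = [exists v, held PF PW k v == Some g].
  by apply: eq_existsb => v; rewrite held_same.
by [].
Qed.

Lemma iter_dev n k :
  proposed PF (iter n (da_step PF PW') k) f w \/
  iter n (da_step PF PW') k = iter n (da_step PF PW) k.
Proof.
elim: n => [|n [IH|IH]] /=; [by right | left | ].
  by apply: proposed_mono IH; apply: step_mono.
case Hp: (proposed PF (iter n (da_step PF PW') k) f w); first by left; apply: proposed_mono Hp; apply: step_mono.
right; rewrite step_same ?Hp // IH //.
Qed.

Lemma outcome_dev :
  da_outcome PF PW' w = Some f \/ da_outcome PF PW' w = da_outcome PF PW w.
Proof.
rewrite /da_outcome /da_final.
case: (iter_dev (\sum_(g : F) size (PF g)).+1 [ffun => 0%N]) => H.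
  by left; apply: held_f.
case Hp: (proposed PF (iter (\sum_(g : F) size (PF g)).+1 (da_step PF PW') [ffun => 0%N]) f w).
  by left; apply: held_f.
by right; rewrite held_same ?Hp // H.
Qed.
End Dev.

Local Open Scope ring_scope.

Theorem lemma1 (R : realFieldType) (F W Th : finType)
    (uF : Th -> F -> W -> R) (uW : W -> F -> R) (Psi : Th -> R)
    (* strict preferences *)
    (HstrF : forall th f, injective (uF th f))
    (HstrW : forall w, injective (uW w))
    (* all pairs mutually acceptable (unmatched utility is 0) *)
    (HaccF : forall th f w, 0 < uF th f w)
    (HaccW : forall w f, 0 < uW w f)
    (* full-support prior *)
    (HPsi_pos : forall th, 0 < Psi th)
    (HPsi_sum : \sum_(th : Th) Psi th = 1)
    (* each market M(theta) has a unique stable matching *)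
    (Huniq : forall th, unique_stable (uF th) uW)
    (sigma : {ffun W -> seq F})
    (Hbne : is_BNE uF uW Psi sigma)
    (th : Th) (f : F) (w : W)
    (HtopF : forall w', uF th f w' <= uF th f w)
    (HtopW : forall f', uW w f' <= uW w f) :
  da_outcome (firm_list (uF th)) sigma w = Some f.
Proof.
apply/eqP; apply/negPn/negP => Hne.
have [Huq Hdev] := Hbne.
set L' := f :: filter (predC1 f) (sigma w).
have uL : uniq L'.
  by rewrite /L' /= mem_filter /= eqxx /= filter_uniq.
set sig' := deviate sigma w L'.
have HPw : sig' w = f :: filter (predC1 f) (sigma w) by rewrite /sig' ffunE eqxx.
have HPo : forall v, v != w -> sig' v = sigma v by move=> v nv; rewrite /sig' ffunE (negbTE nv).
have Hle : forall t, wutil uW w (da_outcome (firm_list (uF t)) sigma w) <=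
                     wutil uW w (da_outcome (firm_list (uF t)) sig' w).
  move=> t; case: (@outcome_dev _ _ (firm_list (uF t)) _ _ _ _ HPw HPo) => ->; last by [].
  case: (da_outcome _ _ _) => [g|] /=; [exact: HtopW | exact: ltW].
have Hhead : exists s', firm_list (uF th) f = w :: s'.
  have win : w \in firm_list (uF th) f by rewrite /firm_list mem_sort mem_enum.
  have srt : sorted (fun a b => uF th f b <= uF th f a) (firm_list (uF th) f).
    by apply: sort_sorted => x y; exact: le_total.
  move: win srt; case: (firm_list (uF th) f) => [//|a s'] win srt.
  exists s'; suff -> : a = w by [].
  move: win; rewrite inE => /orP [/eqP -> //|ws].
  have tr : transitive (fun a b => uF th f b <= uF th f a).
    by move=> y x z H1 H2; exact: le_trans H2 H1.
  have := order_path_min tr srt => /allP /(_ w ws) H.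
  by apply: (HstrF th f); apply/eqP; rewrite eq_le HtopF H.
have Hth : da_outcome (firm_list (uF th)) sig' w = Some f.
  apply: (@held_f _ _ _ _ _ _ _ HPw); rewrite /da_final iterSr.
  have [s' Hs] := Hhead.
  have Hk : (1 <= da_step (firm_list (uF th)) sig' [ffun => 0%N] f)%N.
    rewrite ffunE.
    have -> : is_held (firm_list (uF th)) sig' [ffun => 0%N] f = false.
      apply/negbTE/existsP => [[v /eqP]]; rewrite /held; case: pickP => //.
      by move=> g /andP [/andP []]; rewrite /proposed ffunE take0.
    by rewrite Hs ffunE.
  have := leq_trans Hk (iter_mono _ _ _ _ _ _ f).
  by rewrite /proposed Hs in_take ?mem_head //= eqxx.
have := Hdev w L' uL; apply/negP; rewrite -ltNge.
rewrite /exp_util (bigD1 th) //= [X in _ < X](bigD1 th) //=.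
apply: ltr_leD.
  rewrite ltr_pM2l // Hth /=.
  move: Hne; case: (da_outcome _ _ _) => [g|] /= Hg; last exact: HaccW.
  rewrite lt_neqAle HtopW andbT; apply/eqP => /HstrW E; by rewrite E eqxx in Hg.
apply: ler_sum => t _; apply: ler_wpM2l; [exact: ltW | exact: Hle].
Qed.
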